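(* In the coprime construction of the hider strategy $y$, let $v$ be the first node of a segment. Then $g(v-1)\le y([1,v-1])$ and $g(v+r-1)\le y([1,v-1])+\frac1w$ (i.e., the segment rule holds for $r^*=r$).
   Context: Let $k\ge2$, $n>2^k$, $c=2^k-2$ with $\gcd(c,n-1)=1$, and let $h,w$ be the positive integers with $h(n-1)-wc=1$ and $w\in\{1,\dots,n-2\}$ minimal. Let $g(v)=v\frac{h}{wc}$, $r=\lfloor c/h\rfloor$. For integers $a\le b$, $[a,b]=\{a,\dots,b\}$ (empty if $a>b$), and $y(S)=\sum_{i\in S}y_i$. Construction of $y\in\mathbb{R}^{\{0,\dots,n-1\}}$: $y_0=y_{n-1}=0$; starting at $v=1$, repeatedly choose the largest $r^*\in\{r,r+1\}$ satisfying the segment rule $g(v+r^*-1)\le y([1,v-1])+\frac1w$, set $y_i=\frac{1}{r^*w}$ for $i\in\{v,\dots,v+r^*-1\}$ (the set $\{v,\dots,v+r^*-1\}$ is called a segment, with first node $v$), and replace $v$ by $v+r^*$; stop when $v>n-2$. *)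

(* Defs.v *)
From HB Require Import structures.
From mathcomp Require Import all_boot all_order all_algebra.
Set Implicit Arguments. Unset Strict Implicit. Unset Printing Implicit Defensive.
Import Order.TTheory GRing.Theory Num.Theory.
Local Open Scope ring_scope.

(* Parameters: n (number of nodes 0..n-1), h, w, c (= 2^k - 2). *)

Definition gfun (h w c : nat) (v : nat) : rat := (v%:R * h%:R) / (w * c)%:R.

Definition rpar (c h : nat) : nat := (c %/ h)%N.

Definition ypre (y : nat -> rat) (v : nat) : rat := \sum_(1 <= i < v) y i.

Definition seg_rule (h w c : nat) (y : nat -> rat) (v rs : nat) : bool :=
  gfun h w c (v + rs - 1) <= ypre y v + (w%:R)^-1.

(* largest r* in {r, r+1} satisfying the segment rule
   (defaults to r if r+1 fails; the lemma shows r always satisfies it) *)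
Definition rstar (h w c : nat) (y : nat -> rat) (v : nat) : nat :=
  let r := rpar c h in
  if seg_rule h w c y v r.+1 then r.+1 else r.

Definition assign (w : nat) (y : nat -> rat) (v rs : nat) : nat -> rat :=
  fun i => if ((v <= i) && (i < v + rs))%N then ((rs * w)%:R)^-1 else y i.

Fixpoint build (n h w c : nat) (fuel : nat) (v : nat) (y : nat -> rat)
  : (nat -> rat) * seq nat :=
  match fuel with
  | 0 => (y, [::])
  | fuel'.+1 =>
      if (n - 2 < v)%N then (y, [::])
      else let rs := rstar h w c y v in
           let p := build n h w c fuel' (v + rs) (assign w y v rs) in
           (p.1, v :: p.2)
  end.

Definition hider_y (n h w c : nat) : nat -> rat :=
  fun i => if ((1 <= i) && (i <= n - 2))%N
           then (build n h w c n 1 (fun _ => 0)).1 i else 0.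

Definition first_nodes (n h w c : nat) : seq nat :=
  (build n h w c n 1 (fun _ => 0)).2.

(* Main.v *)
Require Import Defs.
From HB Require Import structures.
From mathcomp Require Import all_boot all_order all_algebra.
Import Order.TTheory GRing.Theory Num.Theory.
Local Open Scope ring_scope.

Section Aux.
Variables (n h w c : nat).
Hypotheses (wpos : (0 < w)%N) (cpos : (0 < c)%N).

Lemma gfun_step v P : (1 <= v)%N -> gfun h w c (v - 1) <= P ->
  gfun h w c (v + rpar c h - 1) <= P + (w%:R)^-1.
Proof.
move=> v1 H.
have -> : (v + rpar c h - 1 = (v - 1) + rpar c h)%N by rewrite addnC -addnBA // addnC.
rewrite /gfun natrD mulrDl mulrDl lerD //.
have wc0 : 0 < (w * c)%:R :> rat by rewrite ltr0n muln_gt0 wpos cpos.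
rewrite ler_pdivrMr // -natrM.
have -> : (w%:R)^-1 * (w * c)%:R = c%:R :> rat.
  rewrite natrM mulrA mulVf ?mul1r // pnatr_eq0 -lt0n //.
rewrite ler_nat /rpar; exact: leq_divM.
Qed.

Lemma build_agree fuel v y i : (i < v)%N -> (build n h w c fuel v y).1 i = y i.
Proof.
elim: fuel v y => [|f IH] v y iv //=.
case: ifP => // _ /=.
rewrite IH; last exact: (leq_trans iv (leq_addr _ _)).
by rewrite /assign leqNgt iv.
Qed.

Lemma ypre_assign y v rs : (1 <= v)%N ->
  ypre (assign w y v rs) (v + rs) = ypre y v + (if rs == 0%N then 0 else (w%:R)^-1).
Proof.
move=> v1; rewrite /ypre (@big_cat_nat _ _ _ v 1 (v + rs) _ _ v1 (leq_addr _ _)) /=.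
congr (_ + _).
  apply: eq_big_nat => i /andP [_ iv]; by rewrite /assign leqNgt iv.
rewrite (eq_big_nat _ _ (F2 := fun _ => ((rs * w)%:R)^-1)); last first.
  by move=> i; rewrite /assign => ->.
rewrite sumr_const_nat addKn.
case: eqP => [->|/eqP rs0]; first by rewrite mulr0n.
rewrite natrM -[_ *+ rs]mulr_natl invfM mulrA mulfV ?mul1r // pnatr_eq0.
exact: rs0.
Qed.

Lemma build_main fuel v y : (1 <= v)%N -> gfun h w c (v - 1) <= ypre y v ->
  forall u, u \in (build n h w c fuel v y).2 ->
   [/\ (1 <= u)%N, (u <= n - 2)%N &
    gfun h w c (u - 1) <= ypre (build n h w c fuel v y).1 u].
Proof.
elim: fuel v y => [|f IH] v y v1 Hg u //=.
case: ifP => // Hn /=.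
rewrite inE => /orP [/eqP ->|Hu].
  split => //; first by rewrite leqNgt Hn.
  rewrite /ypre (eq_big_nat _ _ (F2 := y)); first exact: Hg.
  move=> i /andP [_ iv]; rewrite build_agree; last exact: leq_trans iv (leq_addr _ _).
  by rewrite /assign leqNgt iv.
apply: IH Hu; first exact: leq_trans v1 (leq_addr _ _).
rewrite ypre_assign //.
rewrite /rstar /=; case: ifP => Hs.
  rewrite /seg_rule in Hs; exact: Hs.
case: eqP => [->|_].
  by rewrite addn0 addr0.
exact: gfun_step.
Qed.
End Aux.

Theorem lemma3p4 (k n h w : nat) :
  (2 <= k)%N -> (2 ^ k < n)%N -> coprime (2 ^ k - 2) (n - 1) ->
  (0 < h)%N -> (1 <= w)%N -> (w <= n - 2)%N ->
  (h * (n - 1) = w * (2 ^ k - 2) + 1)%N ->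
  (forall h' w' : nat, (0 < h')%N -> (1 <= w')%N -> (w' <= n - 2)%N ->
      (h' * (n - 1) = w' * (2 ^ k - 2) + 1)%N -> (w <= w')%N) ->
  forall v : nat, v \in first_nodes n h w (2 ^ k - 2) ->
    gfun h w (2 ^ k - 2) (v - 1) <= ypre (hider_y n h w (2 ^ k - 2)) v /\
    gfun h w (2 ^ k - 2) (v + rpar (2 ^ k - 2) h - 1)
      <= ypre (hider_y n h w (2 ^ k - 2)) v + (w%:R)^-1.
Proof.
move=> k2 kn _ _ w1 _ _ _ v.
have cpos : (0 < 2 ^ k - 2)%N.
  rewrite subn_gt0; apply: (@leq_trans (2 ^ 2)) => //; by rewrite leq_exp2l.
rewrite /first_nodes => Hv.
have H0 : gfun h w (2 ^ k - 2) (1 - 1) <= ypre (fun _ => 0) 1.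
  by rewrite /gfun /ypre big_geq // !mul0r.
have [v1 vn Hg] := @build_main n h w (2 ^ k - 2) w1 cpos n 1 (fun _ => 0) (leqnn 1) H0 v Hv.
have E : ypre (hider_y n h w (2 ^ k - 2)) v =
   ypre (build n h w (2 ^ k - 2) n 1 (fun _ => 0)).1 v.
  rewrite /ypre; apply: eq_big_nat => i /andP [i1 iv].
  rewrite /hider_y i1 /=.
  by rewrite (leq_trans (ltnW iv) vn).
rewrite E; split => //.
exact: gfun_step.
Qed.
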